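(* Let $m$ and $k$ be positive integers such that $2m-1<R(m-k,3)$ and $m\ge k+3$. Then $F_v(2_r;r-k+1)\le r+m$ for every integer $r\ge m-1$.
   Context: All graphs are finite, simple and undirected. $\mathrm{cl}(G)$ is the clique number of $G$. $G\overset{v}{\to}(2_r)$ means that in every partition of $V(G)$ into $r$ pairwise disjoint parts some part contains an edge (equivalently $\chi(G)\ge r+1$). $H_v(2_r;q)$ is the set of graphs $G$ with $G\overset{v}{\to}(2_r)$ and $\mathrm{cl}(G)<q$; $F_v(2_r;q)=\min\{|V(G)|:G\in H_v(2_r;q)\}$. The Ramsey number $R(p,3)$ is the least $n$ such that every graph on at least $n$ vertices has a $p$-clique or an independent set of size $3$. *)

(* Defs.v *)
(* Finite simple graphs as symmetric irreflexive relations on a finType. *)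
From mathcomp Require Import all_boot.
Set Implicit Arguments. Unset Strict Implicit. Unset Printing Implicit Defensive.

Section Graphs.
Variable T : finType.

Definition simple_graph (e : rel T) : Prop := symmetric e /\ irreflexive e.

Definition cliqueb (e : rel T) (A : {set T}) : bool :=
  [forall x in A, forall y in A, (x != y) ==> e x y].
Definition indepb (e : rel T) (A : {set T}) : bool :=
  [forall x in A, forall y in A, ~~ e x y].

Definition clique_number (e : rel T) : nat :=
  \max_(A : {set T} | cliqueb e A) #|A|.

(* G -v-> (2_r): in every partition of V(G) into r (possibly empty) pairwise
   disjoint parts, given by the part-index function f, some part contains an edge *)
Definition vertex_arrow2 (r : nat) (e : rel T) : Prop :=
  forall f : T -> 'I_r, exists x y : T, e x y && (f x == f y).

Definition in_Hv (r q : nat) (e : rel T) : Prop :=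
  [/\ simple_graph e, vertex_arrow2 r e & clique_number e < q].
End Graphs.

(* F_v(2_r; q) <= b : some graph of H_v(2_r; q) has at most b vertices
   (graphs on n vertices are represented on vertex set 'I_n) *)
Definition Fv_le (r q b : nat) : Prop :=
  exists n : nat, n <= b /\ exists e : rel 'I_n, in_Hv r q e.

Definition ramsey3_prop (p n : nat) : Prop :=
  forall N : nat, n <= N -> forall e : rel 'I_N, simple_graph e ->
    (exists A : {set 'I_N}, cliqueb e A && (#|A| == p)) \/
    (exists A : {set 'I_N}, indepb e A && (#|A| == 3)).

Definition is_ramsey3 (p R : nat) : Prop :=
  ramsey3_prop p R /\ forall n, ramsey3_prop p n -> R <= n.

(* Main.v *)
Require Import Defs.
From mathcomp Require Import all_boot.
From Stdlib Require Import Lia Classical.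
Set Implicit Arguments. Unset Strict Implicit. Unset Printing Implicit Defensive.

Ltac slia := repeat match goal with
 | H : is_true (leq _ _) |- _ => move/leP: H => H
 | H : context [addn] |- _ => rewrite -plusE in H
 | H : context [subn] |- _ => rewrite -minusE in H
 | H : context [muln] |- _ => rewrite -multE in H
 end; try apply/leP; rewrite -?plusE -?minusE -?multE; lia.

Lemma cliqueP (T : finType) (e : rel T) (A : {set T}) :
  reflect (forall x y, x \in A -> y \in A -> x != y -> e x y) (cliqueb e A).
Proof.
apply: (iffP idP).
- move=> H x y Hx Hy Hxy.
  by move/forallP: H => /(_ x)/implyP/(_ Hx)/forallP/(_ y)/implyP/(_ Hy)/implyP/(_ Hxy).
- move=> H; apply/forallP => x; apply/implyP => Hx; apply/forallP => y.
  apply/implyP => Hy; apply/implyP; exact: H.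
Qed.

Lemma indepP (T : finType) (e : rel T) (A : {set T}) :
  reflect (forall x y, x \in A -> y \in A -> ~~ e x y) (indepb e A).
Proof.
apply: (iffP idP).
- move=> H x y Hx Hy.
  by move/forallP: H => /(_ x)/implyP/(_ Hx)/forallP/(_ y)/implyP/(_ Hy).
- move=> H; apply/forallP => x; apply/implyP => Hx; apply/forallP => y.
  apply/implyP => Hy; exact: H.
Qed.

Lemma sub_card (T : finType) (A : {set T}) n :
  n <= #|A| -> exists2 B : {set T}, B \subset A & #|B| = n.
Proof.
move=> Hn; exists [set x in take n (enum A)].
  by apply/subsetP => x; rewrite inE => /mem_take; rewrite mem_enum.
rewrite cardsE (card_uniqP (take_uniq _ (enum_uniq _))) size_take -cardE.
by rewrite ltn_neqAle Hn andbT; case: eqP.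
Qed.

Lemma clique_img (T1 T2 : finType) (g : T1 -> T2) (e : rel T2) (A : {set T1}) :
  injective g -> cliqueb (fun x y => e (g x) (g y)) A -> cliqueb e (g @: A).
Proof.
move=> gi /cliqueP H; apply/cliqueP => x y /imsetP [x' Hx' ->] /imsetP [y' Hy' ->] Hxy.
apply: H => //; apply: contra Hxy => /eqP -> //.
Qed.

Lemma indep_img (T1 T2 : finType) (g : T1 -> T2) (e : rel T2) (A : {set T1}) :
  indepb (fun x y => e (g x) (g y)) A -> indepb e (g @: A).
Proof.
move=> /indepP H; apply/indepP => x y /imsetP [x' Hx' ->] /imsetP [y' Hy' ->].
exact: H.
Qed.

Lemma clique_sub (T : finType) (e : rel T) (A B : {set T}) :
  B \subset A -> cliqueb e A -> cliqueb e B.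
Proof.
move=> /subsetP sBA /cliqueP H; apply/cliqueP => x y Hx Hy; apply: H; exact: sBA.
Qed.

Lemma indep_sub (T : finType) (e : rel T) (A B : {set T}) :
  B \subset A -> indepb e A -> indepb e B.
Proof.
move=> /subsetP sBA /indepP H; apply/indepP => x y Hx Hy; apply: H; exact: sBA.
Qed.

Definition eS (A B : finType) (eG : rel B) : rel (A + B) := fun u v =>
  match u, v with
  | inl x, inl y => x != y
  | inr x, inr y => eG x y
  | _, _ => true
  end.

Lemma clique_join (A B : finType) (eG : rel B) w :
  (forall S, cliqueb eG S -> #|S| <= w) ->
  forall C, cliqueb (@eS A B eG) C -> #|C| <= #|A| + w.
Proof.
move=> Hw C HC.
have sub : C \subset (inl @: (inl @^-1: C)) :|: (inr @: (inr @^-1: C)).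
  apply/subsetP => -[x|x] Hx; rewrite inE; apply/orP; [left|right];
  apply/imsetP; exists x => //; by rewrite inE.
apply: (leq_trans (subset_leq_card sub)).
apply: (leq_trans (leq_card_setU _ _)).
rewrite !card_imset; try by move=> ? ? [].
apply: leq_add; first exact: max_card.
apply: Hw; apply/cliqueP => x y; rewrite !inE => Hx Hy Hxy.
move/cliqueP: HC => /(_ (inr x) (inr y) Hx Hy); apply.
by apply: contra Hxy => /eqP [->].
Qed.

Lemma arrow_join (A B : finType) (eG : rel B) (r c : nat) :
  r = #|A| + c -> c.*2 < #|B| ->
  (forall S : {set B}, indepb eG S -> #|S| != 3) ->
  vertex_arrow2 r (@eS A B eG).
Proof.
move=> -> Hc Hind f.
case: (boolP [exists x, exists y, eS eG x y && (f x == f y)]).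
  by move=> /existsP [x /existsP [y H]]; exists x, y.
rewrite negb_exists => /forallP H0.
have H : forall x y, eS eG x y -> f x != f y.
  move=> x y Hxy; move: (H0 x); rewrite negb_exists => /forallP /(_ y).
  by rewrite Hxy.
exfalso.
pose IA := [set f (inl x) | x : A].
pose IB := [set f (inr y) | y : B].
have cIA : #|IA| = #|A|.
  rewrite card_imset ?cardsT // => x y Hxy; apply/eqP; apply: contraT => Hn.
  by move: (H (inl x) (inl y) Hn); rewrite Hxy eqxx.
have sIB : IB \subset ~: IA.
  apply/subsetP => z /imsetP [y _ ->]; rewrite inE; apply/imsetP => -[x _ Hx].
  by move: (H (inr y) (inl x) isT); rewrite Hx eqxx.
have cIB : #|IB| <= c.
  apply: (leq_trans (subset_leq_card sIB)).
  by have := cardsC IA; rewrite cIA card_ord => /eqP; rewrite eqn_add2l => /eqP ->.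
have cB : #|B| <= #|IB|.*2.
  rewrite -[#|B|]sum1_card (partition_big (fun y : B => f (inr y)) (mem IB)) /=; last first.
    by move=> y _; apply/imsetP; exists y.
  rewrite -muln2 -sum_nat_const; apply: leq_sum => j _.
  rewrite sum1_card; rewrite leqNgt; apply/negP => Hj.
  have : 3 <= #|[set y | f (inr y) == j]| by rewrite cardsE.
  case/sub_card => S sS cS.
  suff Hi : indepb eG S by move: (Hind S Hi); rewrite cS.
  apply/indepP => x y Hx Hy.
  apply/negP => Exy; move: (H (inr x) (inr y) Exy).
  move/subsetP: sS => sS; move: (sS _ Hx) (sS _ Hy); rewrite !inE => /eqP -> /eqP ->.
  by rewrite eqxx.
move: (leq_trans Hc cB); rewrite ltn_double leqNgt ltnS cIB //.
Qed.

Theorem theorem2p1 (m k R : nat) :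
  0 < m -> 0 < k -> is_ramsey3 (m - k) R -> 2 * m - 1 < R -> k + 3 <= m ->
  forall r : nat, m - 1 <= r -> Fv_le r (r - k + 1) (r + m).
Proof.
move=> m0 k0 [_ Rmin] HR km r hr.
have NR : ~ ramsey3_prop (m - k) (2 * m - 1).
  by move/Rmin; rewrite leqNgt HR.
have [N [hN [e [[esym eirr] [nc ni]]]]] : exists N, 2 * m - 1 <= N /\
   exists e : rel 'I_N, simple_graph e /\
     ~ (exists A : {set 'I_N}, cliqueb e A && (#|A| == m - k)) /\
     ~ (exists A : {set 'I_N}, indepb e A && (#|A| == 3)).
  apply: NNPP => H; apply: NR => N hN e se; apply: NNPP => H2; apply: H.
  exists N; split => //; exists e; split => //.
  by split => H3; apply: H2; [left|right].
pose eG : rel 'I_(2 * m - 1) := fun i j => e (widen_ord hN i) (widen_ord hN j).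
have wi : injective (widen_ord hN).
  move=> x y /(congr1 val) /= H; exact: val_inj.
have p0 : 0 < m - k by slia.
have Hcl : forall S, cliqueb eG S -> #|S| <= (m - k).-1.
  move=> S HS; rewrite leqNgt; apply/negP => Hs.
  have : m - k <= #|S| by rewrite -(prednK p0).
  case/sub_card => S' sS' cS'; apply: nc; exists (widen_ord hN @: S').
  rewrite card_imset // cS' eqxx andbT; apply: clique_img => //.
  exact: clique_sub sS' HS.
have Hin : forall S, indepb eG S -> #|S| != 3.
  move=> S HS; apply/negP => /eqP cS; apply: ni; exists (widen_ord hN @: S).
  rewrite card_imset // cS eqxx andbT; exact: indep_img.
pose a := r + 1 - m.
pose eT := @eS 'I_a 'I_(2 * m - 1) eG.
pose e' : rel 'I_(a + (2 * m - 1)) := fun x y => eT (split x) (split y).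
exists (a + (2 * m - 1)); split; first by rewrite /a; slia.
exists e'; split.
- split.
  + move=> x y; rewrite /e' /eT.
    case: (split x) (split y) => [u|u] [v|v] //=; first by rewrite eq_sym.
    exact: esym.
  + move=> x; rewrite /e' /eT; case: (split x) => u /=; first by rewrite eqxx.
    exact: eirr.
- move=> f.
  have [] := @arrow_join 'I_a 'I_(2 * m - 1) eG r (m - 1) _ _ Hin (fun u => f (unsplit u)).
  + by rewrite card_ord /a; slia.
  + by rewrite card_ord -muln2; slia.
  move=> x [y H]; exists (unsplit x), (unsplit y); by rewrite /e' !unsplitK.
- rewrite /clique_number.
  apply: (@leq_ltn_trans (r - k)); last by slia.
  apply/bigmax_leqP => C HC.
  have si : injective (@split a (2 * m - 1)) := can_inj splitK.
  have := clique_img si HC; rewrite -(card_imset C si) => HC'.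
  apply: (leq_trans (clique_join Hcl HC')).
  rewrite card_ord /a; slia.
Qed.
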